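(* Let $k\ge1$ be the cache size. For any access graph $G$, \[-1+\frac1k\le\mathrm{Min}^G(\mathrm{FIFO},\mathrm{LRU})\quad\text{and}\quad\mathrm{Max}^G(\mathrm{FIFO},\mathrm{LRU})\le\frac12-\frac1{4k-2}.\]
   Context: Paging: a cache holds at most $k$ pages and is initially empty. A request to a page in the cache is a hit; otherwise it is a fault, the page is brought into the cache, evicting a page first if the cache is full. $\mathcal{A}(I)$ is the number of faults of $\mathcal{A}$ on request sequence $I$. LRU evicts the least recently requested cached page; FIFO evicts the cached page that entered the cache earliest. Access graph: a graph $G$ whose vertices are the pages; a request sequence respects $G$ if any two consecutive requests are identical or adjacent in $G$; $L(G)$ is the set of such sequences. Relative interval: $\mathrm{Min}_{\mathcal{A},\mathcal{B}}(n,G)=\min\{\mathcal{A}(I)-\mathcal{B}(I): I\in L(G),|I|=n\}$, $\mathrm{Max}_{\mathcal{A},\mathcal{B}}(n,G)$ analogously with max; $\mathrm{Min}^G(\mathcal{A},\mathcal{B})=\liminf_{n\to\infty}\mathrm{Min}_{\mathcal{A},\mathcal{B}}(n,G)/n$ and $\mathrm{Max}^G(\mathcal{A},\mathcal{B})=\limsup_{n\to\infty}\mathrm{Max}_{\mathcal{A},\mathcal{B}}(n,G)/n$. *)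

(* Defs.v *)
From HB Require Import structures.
From mathcomp Require Import all_boot all_order all_algebra.
From mathcomp Require Import all_classical all_reals all_analysis.
Set Implicit Arguments. Unset Strict Implicit. Unset Printing Implicit Defensive.
Import Order.TTheory GRing.Theory Num.Theory.
Local Open Scope classical_set_scope.
Local Open Scope ring_scope.

(* Paging with cache size k.  A cache state is a seq of pages, ordered
   so that the page to be evicted (by the respective policy) is last. *)

Definition lru_step {T : eqType} (k : nat) (c : seq T) (p : T) : seq T * bool :=
  if p \in c then (p :: rem p c, false)
  else if (size c < k)%N then (p :: c, true) else (p :: take k.-1 c, true).

Definition fifo_step {T : eqType} (k : nat) (c : seq T) (p : T) : seq T * bool :=
  if p \in c then (c, false)
  else if (size c < k)%N then (p :: c, true) else (p :: take k.-1 c, true).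

Fixpoint faults_from {T : eqType} (step : seq T -> T -> seq T * bool)
    (c : seq T) (I : seq T) : nat :=
  match I with
  | [::] => 0%N
  | p :: I' => let (c', f) := step c p in (f + faults_from step c' I')%N
  end.

Definition LRU {T : eqType} (k : nat) (I : seq T) : nat := faults_from (lru_step k) [::] I.
Definition FIFO {T : eqType} (k : nat) (I : seq T) : nat := faults_from (fifo_step k) [::] I.

Definition respects {T : finType} (G : rel T) (I : seq T) : bool :=
  sorted (fun x y => (x == y) || G x y) I.

(* Min_{A,B}(n,G) and Max_{A,B}(n,G) as reals (the sets are finite and,
   for nonempty T, nonempty) *)
Definition MinAB {R : realType} {T : finType} (A B : seq T -> nat) (G : rel T)
    (n : nat) : R :=
  inf [set ((A I)%:R - (B I)%:R : R) | I in [set I : seq T | size I = n /\ respects G I]].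
Definition MaxAB {R : realType} {T : finType} (A B : seq T -> nat) (G : rel T)
    (n : nat) : R :=
  sup [set ((A I)%:R - (B I)%:R : R) | I in [set I : seq T | size I = n /\ respects G I]].

Definition MinG {R : realType} {T : finType} (A B : seq T -> nat) (G : rel T) : R :=
  limn_inf (fun n => MinAB A B G n / n%:R).
Definition MaxG {R : realType} {T : finType} (A B : seq T -> nat) (G : rel T) : R :=
  limn_sup (fun n => MaxAB A B G n / n%:R).

(* Main.v *)
Require Import Defs.
From HB Require Import structures.
From mathcomp Require Import all_boot all_order all_algebra.
From mathcomp Require Import all_classical all_reals all_analysis.
From mathcomp Require Import zify.
From mathcomp.algebra_tactics Require Import ring lra.
Import Order.TTheory GRing.Theory Num.Theory.
Section Comb.
Local Open Scope nat_scope.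
Variable (T : eqType) (k : nat).
Hypothesis hk : 0 < k.

Definition fs (C : seq T) p := if p \in C then C else p :: take k.-1 C.
Definition ls (L : seq T) p := if p \in L then p :: rem p L else p :: take k.-1 L.
Definition Inv (C L : seq T) := [&& uniq C, uniq L, size C <= k & size L <= k].

Fixpoint cnt (w : bool -> bool -> nat) C L I : nat :=
  match I with
  | [::] => 0
  | p :: I' => w (p \notin C) (p \notin L) + cnt w (fs C p) (ls L p) I'
  end.

Lemma Inv_step C L p : Inv C L -> Inv (fs C p) (ls L p).
Proof.
case/and4P=> uC uL sC sL; rewrite /Inv /fs /ls.
apply/and4P; split.
- case: ifPn => // pC /=; rewrite take_uniq // andbT.
  by apply: contra pC; apply: mem_take.
- case: ifPn => pL /=; first by rewrite mem_rem_uniqF // rem_uniq.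
  by rewrite take_uniq // andbT; apply: contra pL; apply: mem_take.
- case: ifPn => // _ /=; rewrite size_take; case: (ltnP k.-1 (size C)) => h; lia.
- case: ifPn => pL /=; last by rewrite size_take; case: (ltnP k.-1 (size L)) => h; lia.
  by rewrite size_rem //; lia.
Qed.

Lemma fifo_stepE C p : size C <= k -> fifo_step k C p = (fs C p, p \notin C).
Proof.
move=> sC; rewrite /fifo_step /fs; case: ifP => // _; case: ifP => // h.
by rewrite take_oversize //; lia.
Qed.

Lemma lru_stepE L p : size L <= k -> lru_step k L p = (ls L p, p \notin L).
Proof.
move=> sL; rewrite /lru_step /ls; case: ifP => // _; case: ifP => // h.
by rewrite take_oversize //; lia.
Qed.

Definition cF := cnt (fun f _ => nat_of_bool f).
Definition cL := cnt (fun _ l => nat_of_bool l).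

Lemma FIFO_cnt I C L : Inv C L -> faults_from (fifo_step k) C I = cF C L I.
Proof.
elim: I C L => [//|p I IH] C L hI /=.
have /and4P[_ _ sC _] := hI.
by rewrite fifo_stepE // (IH _ (ls L p)) //; apply: Inv_step.
Qed.

Lemma LRU_cnt I C L : Inv C L -> faults_from (lru_step k) L I = cL C L I.
Proof.
elim: I C L => [//|p I IH] C L hI /=.
have /and4P[_ _ _ sL] := hI.
by rewrite lru_stepE // (IH (fs C p)) //; apply: Inv_step.
Qed.

Lemma cnt_lin (a b c : nat) I C L :
  cnt (fun f l => a * f + b * l + c) C L I = a * cF C L I + b * cL C L I + c * size I.
Proof.
rewrite /cF /cL.
elim: I C L => [|p I IH] C L /=; first by rewrite !muln0.
rewrite IH; nia.
Qed.

Lemma pot (w1 w2 : bool -> bool -> nat) (Phi : seq T -> seq T -> nat) :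
  (forall C L p, Inv C L ->
     w1 (p \notin C) (p \notin L) + Phi (fs C p) (ls L p) <= Phi C L + w2 (p \notin C) (p \notin L)) ->
  forall I C L, Inv C L -> cnt w1 C L I <= Phi C L + cnt w2 C L I.
Proof.
move=> hs; elim=> [|p I IH] C L hI /=; first by [].
have h1 := hs C L p hI.
have h2 := IH _ _ (Inv_step _ _ p hI).
lia.
Qed.

Lemma cnt_size w I C L : (forall f l, w f l <= 1) -> cnt w C L I <= size I.
Proof.
move=> hw; elim: I C L => [|p I IH] C L //=.
have := hw (p \notin C) (p \notin L); have := IH (fs C p) (ls L p); lia.
Qed.

Definition pref (s : seq T) q := take (index q s) s.

Lemma pref_notin s q : q \notin pref s q.
Proof.
rewrite /pref; elim: s => [//|z s IH] /=.
case: eqP => [-> //|/eqP zq] /=; rewrite in_cons negb_or IH andbT.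
by rewrite eq_sym.
Qed.

Lemma pref_sub s q y : y \in pref s q -> y \in s.
Proof. exact: mem_take. Qed.

Lemma pref_uniq s q : uniq s -> uniq (pref s q).
Proof. exact: take_uniq. Qed.

Lemma size_pref s q : size (pref s q) = index q s.
Proof. by rewrite /pref size_takel // index_size. Qed.

Lemma pref_cons s p q : q != p -> pref (p :: s) q = p :: pref s q.
Proof. by move=> qp; rewrite /pref /= eq_sym (negbTE qp). Qed.

Lemma pref_cons_self s p : pref (p :: s) p = [::].
Proof. by rewrite /pref /= eqxx. Qed.

Lemma pref_rem L p q y : uniq L -> q != p ->
  (y \in pref (rem p L) q) = (y != p) && (y \in pref L q).
Proof.
move=> + qp; elim: L => [_|z L IH /andP[zL uL]]; first by rewrite /pref /= in_nil andbF.
rewrite /=.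
case: (eqVneq z p) => [zp|zp].
  subst z; rewrite (pref_cons _ _ _ qp) in_cons.
  case: (eqVneq y p) => [->|] //=.
  by apply/negbTE; apply: contra zL; apply: pref_sub.
case: (eqVneq q z) => [->|qz]; first by rewrite !pref_cons_self in_nil andbF.
by rewrite !pref_cons // !in_cons IH //; case: (eqVneq y z) => [->|yz] //=; rewrite zp.
Qed.

Lemma pref_cons_rem L p q y : uniq L -> q != p ->
  (y \in pref (p :: rem p L) q) = (y == p) || (y \in pref L q).
Proof.
move=> uL qp; rewrite pref_cons // in_cons pref_rem //.
by case: (eqVneq y p).
Qed.

Lemma pref_take m L q : q \in take m L -> pref (take m L) q = pref L q.
Proof.
move=> qt; have hi : index q L = index q (take m L).
  by rewrite -{1}(cat_take_drop m L) index_cat qt.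
rewrite /pref -hi take_takel //; apply: ltnW; exact: index_ltn.
Qed.

Lemma pref_cons_take m L p q y : q != p -> q \in take m L ->
  (y \in pref (p :: take m L) q) = (y == p) || (y \in pref L q).
Proof. by move=> qp qt; rewrite pref_cons // in_cons pref_take. Qed.

Lemma count_le_in (a1 a2 : pred T) s :
  {in s, forall x, a1 x -> a2 x} -> count a1 s <= count a2 s.
Proof.
elim: s => [//|z s IH] h /=.
have h1 : a1 z -> a2 z by apply: h; rewrite mem_head.
have h2 : count a1 s <= count a2 s.
  by apply: IH => x xs; apply: h; rewrite in_cons xs orbT.
case: (a1 z) h1; case: (a2 z) => //= h1; try lia; by have := h1 isT.
Qed.

Definition bad C L q := ~~ ((q \in C) && all (fun y => y \in pref L q) (pref C q)).
Definition Phi1 C L := count (bad C L) L.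

Lemma Phi1_step C L p : Inv C L ->
  ((p \notin C) && ~~ (p \notin L)) + Phi1 (fs C p) (ls L p) <= Phi1 C L + ~~ (p \notin C).
Proof.
case/and4P=> uC uL sC sL.
rewrite /fs /ls /Phi1.
case: (boolP (p \in C)) => pC /=.
- rewrite add0n.
  case: (boolP (p \in L)) => pL /=.
  + rewrite (permP (perm_to_rem pL) (bad C L)) /=.
    have : count (bad C (p :: rem p L)) (rem p L) <= count (bad C L) (rem p L).
      apply: count_le_in => q qr.
      have := qr; rewrite mem_rem_uniq // => /andP[qp qL].
      apply: contra => /andP[qC /allP H]; rewrite qC /=; apply/allP => y /H yin.
      by rewrite pref_cons_rem // yin orbT.
    case: (bad C (p :: rem p L) p); case: (bad C L p); lia.
  + have : count (bad C (p :: take k.-1 L)) (take k.-1 L) <= count (bad C L) (take k.-1 L).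
      apply: count_le_in => q qt.
      have qp : q != p by apply: contraNneq pL => <-; apply: mem_take qt.
      apply: contra => /andP[qC /allP H]; rewrite qC /=; apply/allP => y /H yin.
      by rewrite pref_cons_take // yin orbT.
    have := leq_count_subseq (bad C L) (take_subseq L k.-1).
    case: (bad C (p :: take k.-1 L) p); lia.
- have bp : bad (p :: take k.-1 C) (ls L p) p = false.
    by rewrite /bad mem_head pref_cons_self.
  case: (boolP (p \in L)) => pL /=.
  + rewrite (permP (perm_to_rem pL) (bad C L)) /=.
    have : count (bad (p :: take k.-1 C) (p :: rem p L)) (rem p L) <= count (bad C L) (rem p L).
      apply: count_le_in => q qr.
      have := qr; rewrite mem_rem_uniq // => /andP[qp qL].
      apply: contra => /andP[qC /allP H].
      have qt : q \in take k.-1 C.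
        rewrite in_take //; rewrite ltnNge; apply/negP => hi.
        have u : uniq (p :: q :: pref C q).
          rewrite /= pref_uniq // pref_notin andbT in_cons negb_or.
          rewrite (contraNneq _ pC) /=; last by move=> ->.
          by rewrite andbT; apply: contra pC; apply: pref_sub.
        have sub : {subset p :: q :: pref C q <= L}.
          move=> y; rewrite !in_cons => /orP[/eqP->//|/orP[/eqP->//|/H]].
          exact: pref_sub.
        have := uniq_leq_size u sub; rewrite /= size_pref; lia.
      rewrite in_cons qt orbT /=; apply/allP => y.
      by rewrite pref_cons_take // pref_cons_rem // => /orP[->//|/H ->]; rewrite orbT.
    move: bp; rewrite /ls pL => ->.
    rewrite /bad (negbTE pC) /=; lia.
  + have : count (bad (p :: take k.-1 C) (p :: take k.-1 L)) (take k.-1 L)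
         <= count (bad C L) (take k.-1 L).
      apply: count_le_in => q qt.
      have qp : q != p by apply: contraNneq pL => <-; apply: mem_take qt.
      have qL := mem_take qt.
      have hiL := index_ltn qt.
      apply: contra => /andP[qC /allP H].
      have qt' : q \in take k.-1 C.
        rewrite in_take //; rewrite ltnNge; apply/negP => hi.
        have sub : {subset pref C q <= pref L q} by move=> y /H.
        have := uniq_leq_size (pref_uniq C q uC) sub; rewrite !size_pref; lia.
      rewrite in_cons qt' orbT /=; apply/allP => y.
      by rewrite pref_cons_take // pref_cons_take // => /orP[->//|/H ->]; rewrite orbT.
    have := leq_count_subseq (bad C L) (take_subseq L k.-1).
    move: bp; rewrite /ls (negbTE pL) => ->; lia.
Qed.

Lemma find_take (a : pred T) s m : find a (take m s) = minn (find a s) m.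
Proof.
elim: s m => [|z s IH] [|m] /=; try by rewrite ?minn0 ?min0n.
by case: (a z); rewrite ?IH ?minnSS.
Qed.

Lemma find_rem (a : pred T) s p : a p = false -> find a s <= (find a (rem p s)).+1.
Proof.
move=> ap; elim: s => [//|z s IH] /=.
case: (eqVneq z p) => [->|zp]; first by rewrite ap.
by rewrite /=; case: (a z) => //.
Qed.

Definition rho (C L : seq T) := find (fun y => y \notin L) C.
Definition pi (C L : seq T) := find (fun y => y \notin C) L.

Lemma rho_step C L p : Inv C L ->
  ((p \notin C) && ~~ (p \notin L)) + rho C L <= rho (fs C p) (ls L p) + (p \notin L) * k.-1.
Proof.
case/and4P=> uC uL sC sL.
have rle : find (fun y => y \notin L) C <= size C by rewrite find_size.
rewrite /fs /ls /rho.
case: (boolP (p \in L)) => pL /=.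
- have memL : forall y, (y \in p :: rem p L) = (y \in L).
    by move=> y; apply: perm_mem; rewrite perm_sym; apply: perm_to_rem.
  have eqf : forall s, find (fun y => y \notin p :: rem p L) s = find (fun y => y \notin L) s.
    by move=> s; apply: eq_find => y; rewrite /= memL.
  case: (boolP (p \in C)) => pC /=; first by rewrite eqf; lia.
  rewrite eqf memL pL /= find_take.
  have : find (fun y => y \notin L) C <= k.-1.
    rewrite leqNgt; apply/negP => hlt.
    have hs : size C = k by lia.
    have : ~~ has (fun y => y \notin L) C by rewrite has_find; lia.
    move/hasPn => allC.
    have u : uniq (p :: C) by rewrite /= pC.
    have sub : {subset p :: C <= L}.
      by move=> y; rewrite in_cons => /orP[/eqP->//|/allC]; rewrite negbK.
    have := uniq_leq_size u sub; rewrite /= hs; lia.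
  lia.
- case: (boolP (p \in C)) => pC /=.
  + have : has (fun y => y \notin L) C by apply/hasP; exists p.
    rewrite has_find; lia.
  + rewrite in_cons eqxx /=; lia.
Qed.

Lemma pi_step C L p : Inv C L ->
  (~~ (p \notin C) && (p \notin L)) + pi C L <= pi (fs C p) (ls L p) + (p \notin C) * k.-1.
Proof.
case/and4P=> uC uL sC sL.
have ple : find (fun y => y \notin C) L <= size L by rewrite find_size.
rewrite /fs /ls /pi.
case: (boolP (p \in C)) => pC /=.
- case: (boolP (p \in L)) => pL /=.
  + rewrite pC /=; have := find_rem (fun y => y \notin C) L p; rewrite /= pC; lia.
  + rewrite pC /= find_take.
    have : find (fun y => y \notin C) L <= k.-1.
      rewrite leqNgt; apply/negP => hlt.
      have hs : size L = k by lia.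
      have : ~~ has (fun y => y \notin C) L by rewrite has_find; lia.
      move/hasPn => allL.
      have u : uniq (p :: L) by rewrite /= pL.
      have sub : {subset p :: L <= C}.
        by move=> y; rewrite in_cons => /orP[/eqP->//|/allL]; rewrite negbK.
      have := uniq_leq_size u sub; rewrite /= hs; lia.
    lia.
- by case: (boolP (p \in L)) => pL /=; rewrite in_cons eqxx /=; lia.
Qed.

Lemma rho_le C L : Inv C L -> rho C L <= k.
Proof. by case/and4P=> _ _ sC _; rewrite /rho (leq_trans (find_size _ _)). Qed.

Lemma pi_le C L : Inv C L -> pi C L <= k.
Proof. by case/and4P=> _ _ _ sL; rewrite /pi (leq_trans (find_size _ _)). Qed.

Lemma Inv0 : Inv [::] [::].
Proof. by []. Qed.

Lemma max_nat (I : seq T) :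
  (k + k.-1) * FIFO k I <= (k + k.-1) * LRU k I + k.-1 * size I + k.
Proof.
rewrite /FIFO /LRU (FIFO_cnt I [::] [::] Inv0) (LRU_cnt I [::] [::] Inv0).
pose w1 := fun f l : bool => (k + k.-1) * f + 0 * l + 0.
pose w2 := fun f l : bool => 0 * f + (k + k.-1) * l + k.-1.
pose Ph := fun C L => k.-1 * Phi1 C L + (k - rho C L).
have H : cnt w1 [::] [::] I <= Ph [::] [::] + cnt w2 [::] [::] I.
  apply: (pot w1 w2 Ph _ I [::] [::] Inv0) => C L p hI; rewrite /w1 /w2 /Ph.
  have h1 := Phi1_step _ _ p hI.
  have h2 := rho_step _ _ p hI.
  have r0 := rho_le _ _ hI.
  have r1 := rho_le _ _ (Inv_step _ _ p hI).
  have h1' := leq_mul (leqnn k.-1) h1; rewrite !mulnDr in h1'.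
  move: h1' h2 r0 r1.
  case: (p \in C); case: (p \in L) => /=; lia.
move: H; rewrite /w1 /w2 /Ph !cnt_lin /= /rho /Phi1 /=; lia.
Qed.

Lemma min_nat (I : seq T) :
  k * LRU k I <= k * FIFO k I + k.-1 * size I + k.
Proof.
rewrite /FIFO /LRU (FIFO_cnt I [::] [::] Inv0) (LRU_cnt I [::] [::] Inv0).
pose w1 := fun f l : bool => 0 * f + k * l + 0.
pose w2 := fun f l : bool => k * f + 0 * l + k.-1.
pose Ph := fun C L => k - pi C L.
have H : cnt w1 [::] [::] I <= Ph [::] [::] + cnt w2 [::] [::] I.
  apply: (pot w1 w2 Ph _ I [::] [::] Inv0) => C L p hI; rewrite /w1 /w2 /Ph.
  have h2 := pi_step _ _ p hI.
  have r0 := pi_le _ _ hI.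
  have r1 := pi_le _ _ (Inv_step _ _ p hI).
  move: h2 r0 r1.
  case: (p \in C); case: (p \in L) => /=; lia.
move: H; rewrite /w1 /w2 /Ph !cnt_lin /= /pi /=; lia.
Qed.

Lemma LRU_le (I : seq T) : LRU k I <= size I.
Proof.
rewrite /LRU (LRU_cnt I [::] [::] Inv0); apply: cnt_size => f l; by case: l.
Qed.

Lemma FIFO_le (I : seq T) : FIFO k I <= size I.
Proof.
rewrite /FIFO (FIFO_cnt I [::] [::] Inv0); apply: cnt_size => f l; by case: f.
Qed.

End Comb.
Local Open Scope ring_scope.
Local Open Scope classical_set_scope.

Lemma bnd_fun (R : realType) (u : R^nat) (M : R) :
  (forall n, `|u n| <= M) -> bounded_fun u.
Proof.
move=> hM; rewrite /bounded_near; near=> M' => n _ /=.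
apply: le_trans (hM n) _.
near: M'; apply: nbhs_pinfty_ge; apply: (@ger0_real _ M).
exact: le_trans (normr_ge0 (u 0%N)) (hM 0%N).
Unshelve. all: by end_near.
Qed.

Lemma choose_N (R : realType) (K e : R) : 0 <= K -> 0 < e ->
  exists N : nat, (0 < N)%N /\ forall m : nat, (N <= m)%N -> K / m%:R <= e.
Proof.
move=> hK he.
exists (Num.bound (K / e)).+1; split => // m hm.
have hb := archi_boundP (divr_ge0 hK (ltW he)).
have m0 : (0 < m)%N by apply: leq_trans hm.
rewrite ler_pdivrMr ?ltr0n //.
have : K / e < m%:R.
  apply: lt_le_trans hb _; rewrite ler_nat; apply: leq_trans hm; exact: leqnSn.
by rewrite ltr_pdivrMr // mulrC => /ltW.
Qed.

Lemma limsup_le (R : realType) (u : R^nat) (M c K : R) :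
  (forall n, `|u n| <= M) -> 0 <= K ->
  (forall n, (0 < n)%N -> u n <= c + K / n%:R) -> limn_sup u <= c.
Proof.
move=> hM hK hu.
have bu := @bnd_fun _ _ _ hM.
rewrite limn_supE //.
apply/ler_addgt0Pr => e e0.
have [N [N0 hN]] := @choose_N _ _ _ hK e0.
apply: (@le_trans _ _ (sups u N)).
  by apply: ge_inf; [exact: bounded_fun_has_lbound_sups | exists N].
rewrite /sups /=; apply: ge_sup; first by exists (u N); exists N => /=.
move=> _ [m /= Nm <-].
apply: le_trans (hu m (leq_trans N0 Nm)) _.
by rewrite lerD2l hN.
Qed.

Lemma liminf_ge (R : realType) (u : R^nat) (M c K : R) :
  (forall n, `|u n| <= M) -> 0 <= K ->
  (forall n, (0 < n)%N -> c - K / n%:R <= u n) -> c <= limn_inf u.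
Proof.
move=> hM hK hu.
have bu := @bnd_fun _ _ _ hM.
rewrite limn_infE //.
apply/ler_addgt0Pr => e e0.
have [N [N0 hN]] := @choose_N _ _ _ hK e0.
apply: (@le_trans _ _ (infs u N + e)); last first.
  rewrite lerD2r; apply: ub_le_sup; [exact: bounded_fun_has_ubound_infs | by exists N].
rewrite -lerBlDr; rewrite /infs /=; apply: lb_le_inf; first by exists (u N); exists N => /=.
move=> _ [m /= Nm <-].
apply: (le_trans _ (hu m (leq_trans N0 Nm))).
by rewrite lerD2l lerN2 hN.
Qed.

Lemma norm_div_le1 (R : realType) (X : R) (n : nat) :
  - n%:R <= X -> X <= n%:R -> `|X / n%:R| <= 1.
Proof.
case: n => [|n] h1 h2; first by rewrite invr0 mulr0 normr0.
rewrite normrM normfV (ger0_norm (ler0n _ _)) ler_pdivrMr ?ltr0n // mul1r.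
by rewrite ler_norml h1 h2.
Qed.

Lemma respects_nseq (T : finType) (G : rel T) n t : respects G (nseq n t).
Proof.
rewrite /respects; case: n => //= n; elim: n => //= n ->; by rewrite eqxx.
Qed.

Theorem lemma4 (R : realType) (T : finType) (G : rel T) (k : nat) :
  (0 < k)%N -> symmetric G -> (0 < #|T|)%N ->
  -1 + (k%:R : R)^-1 <= MinG (FIFO k) (LRU k) G /\
  MaxG (FIFO k) (LRU k) G <= 2^-1 - ((4 * k - 2)%N%:R : R)^-1.
Proof.
move=> hk _ hT.
have /card_gt0P [t _] := hT.
case: k hk => [//|j] hk.
pose J : R := j%:R.
have J0 : 0 <= J by rewrite ler0n.
set S := fun n => [set I : seq T | size I = n /\ respects G I].
have neS n : S n (nseq n t) by split; [exact: size_nseq | exact: respects_nseq].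
have elt (I : seq T) : - (size I)%:R <= (FIFO j.+1 I)%:R - (LRU j.+1 I)%:R :> R /\
                       (FIFO j.+1 I)%:R - (LRU j.+1 I)%:R <= (size I)%:R :> R.
  have h1 := @FIFO_le _ _ hk I; have h2 := @LRU_le _ _ hk I.
  rewrite -(ler_nat R) in h1; rewrite -(ler_nat R) in h2.
  have h3 : 0 <= (FIFO j.+1 I)%:R :> R by rewrite ler0n.
  have h4 : 0 <= (LRU j.+1 I)%:R :> R by rewrite ler0n.
  split; lra.
have hmax (I : seq T) : (FIFO j.+1 I)%:R - (LRU j.+1 I)%:R <=
                        (J * (size I)%:R + (J + 1)) / (2 * J + 1) :> R.
  have := @max_nat _ _ hk I; rewrite -(ler_nat R) /= !natrD !natrM -addn1 !natrD /= -/J => H.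
  rewrite ler_pdivlMr; last by lra.
  nra.
have hmin (I : seq T) : - ((J * (size I)%:R + (J + 1)) / (J + 1)) <=
                        (FIFO j.+1 I)%:R - (LRU j.+1 I)%:R :> R.
  have := @min_nat _ _ hk I; rewrite -(ler_nat R) /= !natrD !natrM -addn1 !natrD /= -/J => H.
  rewrite -mulNr ler_pdivrMr; last by lra.
  nra.
split.
- rewrite /MinG.
  apply: (@liminf_ge _ _ 1 _ 1); last 2 first.
  + exact: ler01.
  + move=> n n0.
    rewrite /MinAB ler_pdivlMr ?ltr0n //.
    apply: lb_le_inf; first by exists ((FIFO j.+1 (nseq n t))%:R - (LRU j.+1 (nseq n t))%:R);
      exists (nseq n t) => //; exact: neS.
    move=> _ [I [hs _] <-]; apply: le_trans (hmin I); rewrite hs.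
    have n0' : (0 : R) < n%:R by rewrite ltr0n.
    rewrite -addn1 natrD -/J.
    have J1 : J + 1 != 0 by rewrite gt_eqF //; lra.
    have nn : n%:R != 0 :> R by rewrite gt_eqF.
    rewrite le_eqVlt; apply/orP; left; apply/eqP; field; by apply/andP; split.
  + move=> n; apply: norm_div_le1.
    * apply: lb_le_inf; first by exists ((FIFO j.+1 (nseq n t))%:R - (LRU j.+1 (nseq n t))%:R);
        exists (nseq n t) => //; exact: neS.
      by move=> _ [I [hs _] <-]; rewrite -hs; case: (elt I).
    * apply: (@le_trans _ _ ((FIFO j.+1 (nseq n t))%:R - (LRU j.+1 (nseq n t))%:R)).
        apply: ge_inf; last by exists (nseq n t) => //; exact: neS.
        by exists (- n%:R) => _ [I [hs _] <-]; rewrite -hs; case: (elt I).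
      by case: (elt (nseq n t)); rewrite size_nseq.
- have -> : (4 * j.+1 - 2 = 4 * j + 2)%N by lia.
  rewrite /MaxG.
  apply: (@limsup_le _ _ 1 _ ((J + 1) / (2 * J + 1))).
  + move=> n; apply: norm_div_le1.
    * apply: (@le_trans _ _ ((FIFO j.+1 (nseq n t))%:R - (LRU j.+1 (nseq n t))%:R)).
        by case: (elt (nseq n t)); rewrite size_nseq.
      apply: ub_le_sup; last by exists (nseq n t) => //; exact: neS.
      by exists (n%:R) => _ [I [hs _] <-]; rewrite -hs; case: (elt I).
    * apply: ge_sup; first by exists ((FIFO j.+1 (nseq n t))%:R - (LRU j.+1 (nseq n t))%:R);
        exists (nseq n t) => //; exact: neS.
      by move=> _ [I [hs _] <-]; rewrite -hs; case: (elt I).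
  + by apply: divr_ge0; lra.
  + move=> n n0.
    have n0' : (0 : R) < n%:R by rewrite ltr0n.
    rewrite /MaxAB ler_pdivrMr //.
    apply: ge_sup; first by exists ((FIFO j.+1 (nseq n t))%:R - (LRU j.+1 (nseq n t))%:R);
      exists (nseq n t) => //; exact: neS.
    move=> _ [I [hs _] <-]; apply: le_trans (hmax I) _; rewrite hs.
    have j0 : 0 <= j%:R :> R := ler0n _ _.
    have nn : n%:R != 0 :> R by rewrite gt_eqF.
    rewrite le_eqVlt; apply/orP; left; apply/eqP; field.
    by apply/and3P; split => //; rewrite gt_eqF //; lra.
Qed.
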